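(* Let $D$ be a strong digraph with $D\in\mathcal{LE}_2$. Then $\chi(D)\leq 3$.
   Context: All digraphs are finite, without loops or multiple arcs. Paths and cycles are directed; the length of a path or cycle is its number of arcs. The chromatic number $\chi(D)$ is the least $k$ such that the vertices of $D$ can be coloured with $k$ colours so that any two vertices joined by an arc (in either direction) get different colours. A digraph is strong if for every ordered pair of vertices $x,y$ there is a directed path from $x$ to $y$. For a subdigraph $H$ of a digraph $D$, an ear of $H$ in $D$ is either a directed path in $D$ whose two end vertices lie in $H$ and whose internal vertices do not lie in $H$, or a directed cycle in $D$ having exactly one vertex in $H$. An ear decomposition of a strong digraph $D$ is a sequence $(D_0,D_1,\ldots,D_k)$ of strong subdigraphs of $D$ such that $D_0$ is a directed cycle, $D_{j+1}=D_j\cup P_j$ where $P_j$ is an ear of $D_j$ in $D$ for every $j\in\{0,\ldots,k-1\}$, and $D_k=D$. For an integer $i\geq 1$, $\mathcal{LE}_i$ denotes the family of strong digraphs having an ear decomposition in which every ear has length at least $i$. *)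

(* Defs.v *)
From mathcomp Require Import all_boot.
Set Implicit Arguments. Unset Strict Implicit. Unset Printing Implicit Defensive.

Section Digraphs.
Variable T : finType.
(* Multiple arcs cannot occur;
   looplessness is the hypothesis [irreflexive E] in the theorem. *)
Variable E : rel T.

Definition strong := forall x y : T, connect E x y.

Definition colorableb (k : nat) : bool :=
  [exists c : {ffun T -> 'I_k}, [forall u, forall v, E u v ==> (c u != c v)]].

(* Chromatic number: the least k such that D is k-colourable.  For a loopless
   digraph, D is #|T|-colourable, so the least such k lies in 0..#|T| and is
   found by this search. *)
Definition chi : nat := find colorableb (iota 0 #|T|.+1).

Lemma colorable_card : irreflexive E -> colorableb #|T|.
Proof.
move=> irrE; apply/existsP; exists [ffun x => enum_rank x].
apply/forallP => u; apply/forallP => v; apply/implyP => Euv.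
rewrite !ffunE; apply/negP => /eqP /enum_rank_inj Huv.
by move: Euv; rewrite Huv irrE.
Qed.

Lemma chiP : irreflexive E ->
  colorableb chi /\ forall k, colorableb k -> chi <= k.
Proof.
move=> irrE; have hc := colorable_card irrE.
have hhas : has colorableb (iota 0 #|T|.+1).
  apply/hasP; exists #|T| => //; by rewrite mem_iota add0n ltnSn.
have hlt := hhas; rewrite has_find size_iota in hlt.
split.
  by have := nth_find 0 hhas; rewrite nth_iota.
move=> k hk; rewrite leqNgt; apply/negP => hkc.
have := before_find 0 hkc; rewrite nth_iota ?add0n ?hk //.
exact: ltn_trans hkc hlt.
Qed.

(* x :: q is a directed path (distinct vertices, consecutive ones joined by
   arcs); its length is size q and its arcs are zip (x :: q) q. *)
Definition is_dpath (x : T) (q : seq T) : bool := path E x q && uniq (x :: q).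
Definition path_arcs (x : T) (q : seq T) : seq (T * T) := zip (x :: q) q.

(* x :: q is a directed cycle x -> q_1 -> ... -> q_m -> x with distinct
   vertices, m >= 1; its length is size q + 1, its arcs zip (x::q) (rcons q x). *)
Definition is_dcycle (x : T) (q : seq T) : bool :=
  (0 < size q) && path E x (rcons q x) && uniq (x :: q).
Definition cycle_arcs (x : T) (q : seq T) : seq (T * T) := zip (x :: q) (rcons q x).

Definition strong_sub (V : {set T}) (A : {set T * T}) : Prop :=
  forall x y, x \in V -> y \in V -> connect (fun u v => (u, v) \in A) x y.

Definition path_ear (V : {set T}) (x : T) (q : seq T) : bool :=
  [&& is_dpath x q, 0 < size q, x \in V, last x q \in V &
      all (fun v => v \notin V) (behead (belast x q))].

Definition cycle_ear (V : {set T}) (x : T) (q : seq T) : bool :=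
  [&& is_dcycle x q, x \in V & all (fun v => v \notin V) q].

(* LEdec i V A : (V, A) is the last term D_j of a sequence (D_0, ..., D_j) of
   strong subdigraphs of D where D_0 is a directed cycle of D and each
   D_{l+1} = D_l \cup P_l for an ear P_l of D_l in D of length at least i. *)
Inductive LEdec (i : nat) : {set T} -> {set T * T} -> Prop :=
  | LE_base x q :
      is_dcycle x q ->
      strong_sub [set v in x :: q] [set a in cycle_arcs x q] ->
      LEdec i [set v in x :: q] [set a in cycle_arcs x q]
  | LE_path V A x q :
      LEdec i V A -> path_ear V x q -> i <= size q ->
      strong_sub (V :|: [set v in x :: q]) (A :|: [set a in path_arcs x q]) ->
      LEdec i (V :|: [set v in x :: q]) (A :|: [set a in path_arcs x q])
  | LE_cycle V A x q :
      LEdec i V A -> cycle_ear V x q -> i <= (size q).+1 ->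
      strong_sub (V :|: [set v in x :: q]) (A :|: [set a in cycle_arcs x q]) ->
      LEdec i (V :|: [set v in x :: q]) (A :|: [set a in cycle_arcs x q]).

Definition in_LE (i : nat) : Prop :=
  LEdec i [set: T] [set a : T * T | E a.1 a.2].

End Digraphs.

(* Main.v *)
Require Import Defs.
From mathcomp Require Import all_boot.
Set Implicit Arguments.

Section Aux.
Variable T : finType.

Lemma mem_zip2 {s t : seq T} {a} : a \in zip s t -> a.1 \in s /\ a.2 \in t.
Proof.
elim: s t => [|x s IH] [|y t] //=.
rewrite in_cons => /orP [/eqP -> | /IH [h1 h2]] /=.
  by rewrite !in_cons !eqxx.
by rewrite !in_cons h1 h2 !orbT.
Qed.

Lemma path_zip1 {R : rel T} {p s y a} :
  path R p (rcons s y) -> a \in zip (p :: s) (rcons s y) -> R a.1 a.2.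
Proof.
elim: s p => [|v s IH] p /=.
  by rewrite andbT => h; rewrite in_cons in_nil orbF => /eqP ->.
move=> /andP [h1 h2]; rewrite in_cons => /orP [/eqP -> //| ha].
exact: IH h2 ha.
Qed.

Lemma path_zip2 {R : rel T} {p l a} :
  path R p l -> a \in zip (p :: l) l -> R a.1 a.2.
Proof.
elim: l p => [|v l IH] p //=.
move=> /andP [h1 h2]; rewrite in_cons => /orP [/eqP -> //| ha].
exact: IH h2 ha.
Qed.

Lemma pick3 (a b : 'I_3) : exists k : 'I_3, (k != a) && (k != b).
Proof.
case: (eqVneq a ord0) => [->|a0].
  case: (eqVneq b (inord 1)) => [->|b1].
    by exists (inord 2); apply/andP; split; apply/eqP => /(congr1 val); rewrite /= !inordK.
  exists (inord 1); apply/andP; split; last by rewrite eq_sym.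
  by apply/eqP => /(congr1 val); rewrite /= !inordK.
case: (eqVneq b ord0) => [->|b0]; last by exists ord0; rewrite eq_sym a0 eq_sym b0.
case: (eqVneq a (inord 1)) => [->|a1].
  by exists (inord 2); apply/andP; split; apply/eqP => /(congr1 val); rewrite /= !inordK.
exists (inord 1); apply/andP; split; first by rewrite eq_sym.
by apply/eqP => /(congr1 val); rewrite /= !inordK.
Qed.

Lemma chain (s : seq T) : forall (p y : T) (c : T -> 'I_3),
  uniq s -> p \notin s -> y \notin s -> 0 < size s ->
  exists c' : T -> 'I_3, (forall v, v \notin s -> c' v = c v) /\
     path (fun u w => c' u != c' w) p (rcons s y).
Proof.
elim: s => [|v s IH] p y c //= /andP [vs us] pn yn _.
move: pn yn; rewrite !in_cons !negb_or => /andP [pv ps] /andP [yv ys].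
case: s IH vs us ps ys => [|w s] IH vs us ps ys.
  have [k /andP [k1 k2]] := pick3 (c p) (c y).
  exists (fun u => if u == v then k else c u); split.
    by move=> u; rewrite in_cons in_nil orbF => /negbTE ->.
  by rewrite /= eqxx (negbTE pv) (negbTE yv) eq_sym k1 k2.
have [k /andP [k1 _]] := pick3 (c p) (c p).
have [c' [h1 h2]] := IH v y (fun u => if u == v then k else c u) us vs ys isT.
exists c'; split.
  move=> u; rewrite in_cons negb_or => /andP [uv us'].
  by rewrite h1 // (negbTE uv).
rewrite rcons_cons /=; apply/andP; split; last exact: h2.
rewrite h1 // h1 // eqxx (negbTE pv).
by rewrite eq_sym.
Qed.

Lemma LE_color (E : rel T) V A : LEdec E 2 V A ->
  exists c : T -> 'I_3, forall a, a \in A -> [&& a.1 \in V, a.2 \in V & c a.1 != c a.2].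
Proof.
elim.
- move=> x q /andP [/andP [sq _] uq] _.
  move: uq => /= /andP [xq uq].
  have [c' [_ h2]] := @chain q x x (fun _ => ord0) uq xq xq sq.
  exists c' => a; rewrite inE => ha; rewrite inE in ha.
  have [m1 m2] := mem_zip2 ha.
  rewrite !in_set m1 /=.
  move: m2; rewrite mem_rcons => -> /=.
  exact: path_zip1 h2 ha.
- move=> V0 A0 x q _ [c hc] /and5P [/andP [_ uq] sq xV lV intV] hs _.
  move: uq sq lV intV hs; case/lastP: q => [|s y] //.
  rewrite last_rcons belast_rcons size_rcons /= => /andP [xq uq] _ yV intV ss.
  move: xq uq; rewrite mem_rcons in_cons negb_or rcons_uniq => /andP [xy xs] /andP [ys us].
  have [c' [h1 h2]] := @chain s x y c us xs ys ss.
  have hV : forall v, v \in V0 -> c' v = c v.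
    move=> v vV; apply: h1; apply/negP => vs.
    by move/allP: intV => /(_ v vs); rewrite vV.
  exists c' => a; rewrite inE => /orP [ha | ha].
    have /and3P [a1 a2 a3] := hc a ha.
    by rewrite !inE a1 a2 !hV.
  rewrite inE in ha.
  have [m1 m2] := mem_zip2 ha.
  rewrite !in_setU !in_set m1 orbT /= in_cons m2 !orbT /=.
  exact: path_zip2 h2 ha.
- move=> V0 A0 x q _ [c hc] /and3P [/andP [/andP [sq _] uq] xV intV] _ _.
  move: uq => /= /andP [xq uq].
  have [c' [h1 h2]] := @chain q x x c uq xq xq sq.
  have hV : forall v, v \in V0 -> c' v = c v.
    move=> v vV; apply: h1; apply/negP => vs.
    by move/allP: intV => /(_ v vs); rewrite vV.
  exists c' => a; rewrite inE => /orP [ha | ha].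
    have /and3P [a1 a2 a3] := hc a ha.
    by rewrite !inE a1 a2 !hV.
  rewrite inE in ha.
  have [m1 m2] := mem_zip2 ha.
  rewrite !in_setU !in_set m1 orbT /=.
  move: m2; rewrite mem_rcons => -> ; rewrite orbT /=.
  exact: path_zip1 h2 ha.
Qed.

End Aux.

Theorem mainTheorem14 (T : finType) (E : rel T) :
  irreflexive E -> strong E -> in_LE E 2 -> chi E <= 3.
Proof.
move=> irrE _ hLE.
have [c hc] := LE_color hLE.
have [_ hmin] := chiP irrE; apply: hmin.
apply/existsP; exists [ffun v => c v].
apply/forallP => u; apply/forallP => v; apply/implyP => Euv.
have := hc (u, v); rewrite inE => /(_ Euv) /and3P [_ _ h].
by rewrite !ffunE.
Qed.
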